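(* Let $\mathbf{A}\in\mathbb{R}^{n\times d}$ have full column rank, $k\in[d]$ with $2k\le d$, and $\alpha\ge1$. Define $T:=\lceil\sqrt{\log(d/(2k))/\alpha}\rceil$ and $k_t:=\max\{\lceil d\exp(-\alpha t^2)\rceil,2k\}$ for all $t\in\{0,1,\dots,T\}$. Then for all $p\in[1,100]$, $\eta\in(0,1)$, and $t\in[T]$, $$k_{t-1}^p\sqrt{\frac{\overline{\Sigma}_{k_t}(\mathbf{A})}{\sigma_d(\mathbf{A})^2}}\exp(\alpha t)=O\Big(d^p\,\bar\kappa_{k,p^{-1}+\eta}(\mathbf{A})\exp\Big(\alpha\Big(p(c_p^2-1)+\frac{c_p^2}{\eta}\Big)\Big)\Big),\quad\text{where } c_p:=1+\frac{1}{2p},$$ and the constant in $O(\cdot)$ is absolute (independent of $\mathbf{A},d,k,\alpha,p,\eta,t$).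
   Context: $n\ge d$; $\sigma_1(\mathbf{A})\ge\cdots\ge\sigma_d(\mathbf{A})>0$ are the singular values of $\mathbf{A}$; $\overline{\Sigma}_k(\mathbf{A}):=\frac1k\sum_{i>k}\sigma_i(\mathbf{A})^2$; for $q\in(0,\infty)$, $\bar\kappa_{k,q}(\mathbf{A}):=\big(\frac{1}{d-k}\sum_{i>k}\sigma_i(\mathbf{A})^q/\sigma_d(\mathbf{A})^q\big)^{1/q}$; $\log$ is the natural logarithm. *)

(* Defs.v *)
From HB Require Import structures.
From mathcomp Require Import all_boot all_order all_algebra.
From mathcomp Require Import all_classical all_reals all_analysis.
Set Implicit Arguments. Unset Strict Implicit. Unset Printing Implicit Defensive.
Import Order.TTheory GRing.Theory Num.Theory.
Local Open Scope ring_scope.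

Section Defs.
Variable R : realType.

Definition orthogonal_mx m (Q : 'M[R]_m) : Prop := Q *m Q^T = 1%:M.

(* s : nat -> R lists singular values with 1-based indexing:
   s 1 >= s 2 >= ... >= s d >= 0 and A = U * diag(s 1, ..., s d) * V^T
   for orthogonal U (n x n) and V (d x d) (a full SVD of A, n >= d).
   The values s i for i = 0 or i > d are irrelevant. *)
Definition is_singular_values n d (A : 'M[R]_(n, d)) (s : nat -> R) : Prop :=
  (forall i j : nat, (1 <= i)%N -> (i <= j)%N -> (j <= d)%N -> s j <= s i) /\
  (forall i : nat, (1 <= i)%N -> (i <= d)%N -> 0 <= s i) /\
  exists (U : 'M[R]_n) (V : 'M[R]_d),
    orthogonal_mx U /\ orthogonal_mx V /\
    A = U *m (\matrix_(i < n, j < d) (if (i : nat) == (j : nat) then s j.+1 else 0))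
          *m V^T.

Definition SigmaBar (d : nat) (s : nat -> R) (k : nat) : R :=
  k%:R^-1 * \sum_(k.+1 <= i < d.+1) s i ^+ 2.

Definition kappaBar (d : nat) (s : nat -> R) (k : nat) (q : R) : R :=
  ((d - k)%:R^-1 * \sum_(k.+1 <= i < d.+1) (s i / s d) `^ q) `^ q^-1.

Definition Tpar (d k : nat) (alpha : R) : nat :=
  `|Num.ceil (Num.sqrt (ln (d%:R / (2 * k)%:R) / alpha))|%N.

Definition kpar (d k : nat) (alpha : R) (t : nat) : nat :=
  maxn `|Num.ceil (d%:R * expR (- (alpha * (t%:R) ^+ 2)))|%N (2 * k).

End Defs.

(* Main.v *)
Require Import Defs.
From HB Require Import structures.
From mathcomp Require Import all_boot all_order all_algebra.
From mathcomp Require Import ring lra zify.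
From mathcomp Require Import all_classical all_reals all_analysis.
Import Order.TTheory GRing.Theory Num.Theory.
Local Open Scope ring_scope.

Lemma key (R : realType) (d k K : nat) (s : nat -> R) (q : R) :
 (1 <= k)%N -> (2*k <= K)%N -> 0 < q -> q < 2 ->
 (forall i j, (1<=i)%N -> (i<=j)%N -> (j<=d)%N -> s j <= s i) -> 0 < s d ->
 Num.sqrt (SigmaBar d s K / s d ^+ 2) <= (2 * d%:R / K%:R) `^ q^-1 * kappaBar d s k q.
Proof.
move=> k1 kK q0 q2 mono sd0.
have K0 : (0 < K)%N by lia.
have [dK|Kd] := leqP d K.
  rewrite /SigmaBar big_geq ?ltnS // mulr0 mul0r sqrtr0.
  by apply: mulr_ge0; exact: powR_ge0.
pose r i := s i / s d.
have rpos i : (1 <= i <= d)%N -> 0 < r i.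
  move=> /andP[i1 id]; rewrite /r divr_gt0 //.
  exact: lt_le_trans sd0 (mono i d i1 id (leqnn d)).
have rle i j : (1<=i)%N -> (i<=j)%N -> (j<=d)%N -> r j <= r i.
  by move=> *; rewrite /r ler_pM2r ?invr_gt0 //; apply: mono.
set Q := \sum_(k.+1 <= i < d.+1) r i `^ q.
set x := r K.+1.
have x0 : 0 < x by apply: rpos; lia.
have hSB : SigmaBar d s K / s d ^+ 2 = K%:R^-1 * \sum_(K.+1 <= i < d.+1) r i ^+ 2.
  rewrite /SigmaBar -mulrA mulr_suml; congr (_ * _); apply: eq_bigr => i _.
  by rewrite /r expr_div_n.
have hb : \sum_(K.+1 <= i < d.+1) r i ^+ 2 <= x `^ (2 - q) * \sum_(K.+1 <= i < d.+1) r i `^ q.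
  rewrite mulr_sumr; apply: ler_sum_nat => i /andP[Ki id].
  have ri : 0 < r i by apply: rpos; lia.
  rewrite -powR_mulrn; last exact: ltW ri.
  rewrite (_ : r i `^ 2%:R = r i `^ ((2 - q) + q)); last by rewrite addrNK.
  rewrite powRD; last by apply/implyP => _; rewrite gt_eqF.
  apply: ler_wpM2r; first exact: powR_ge0.
  have ri0 := ltW ri; have x00 := ltW x0; have q2' := ltW q2.
  apply: ge0_ler_powR; rewrite ?nnegrE ?subr_ge0 ?ri0 ?x00 ?q2' //.
  apply: rle; lia.
have hc : \sum_(K.+1 <= i < d.+1) r i `^ q <= Q.
  rewrite /Q [X in _ <= X](big_cat_nat _ (n:=K.+1)) //=; try lia.
  rewrite lerDr; apply: sumr_ge0 => i _; exact: powR_ge0.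
have hd : (K.+1 - k)%:R * x `^ q <= Q.
  rewrite /Q [X in _ <= X](big_cat_nat _ (n:=K.+2)) //=; try lia.
  apply: ler_wpDr; first by apply: sumr_ge0 => i _; exact: powR_ge0.
  have -> : (K.+1 - k = K.+2 - k.+1)%N by lia.
  rewrite mulr_natl -sumr_const_nat.
  apply: ler_sum_nat => i /andP[a b].
  have x00 := ltW x0; have ri0 : 0 <= r i by apply/ltW/rpos; lia.
  apply: ge0_ler_powR; rewrite ?nnegrE ?ri0 ?x00 ?(ltW q0) //.
  apply: rle; lia.
have Q0 : 0 <= Q by apply: sumr_ge0 => i _; exact: powR_ge0.
pose y := 2 * Q / K%:R.
have Kr0 : (0 : R) < K%:R by rewrite ltr0n.
have y0 : 0 <= y by rewrite /y divr_ge0 ?mulr_ge0 // ltW.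
have xq : x `^ q <= y.
  have hK : (K%:R : R) <= 2 * (K.+1 - k)%:R.
    by rewrite -natrM ler_nat; lia.
  have xq0 := powR_ge0 x q.
  rewrite /y ler_pdivlMr //.
  apply: le_trans (_ : x `^ q * (2 * (K.+1 - k)%:R) <= _).
    exact: ler_wpM2l.
  nra.
have x2q : x `^ (2-q) <= y `^ (2/q - 1).
  have -> : 2 - q = q * (2/q - 1) by field; rewrite gt_eqF.
  rewrite powRrM; apply: ge0_ler_powR; rewrite ?nnegrE ?powR_ge0 //.
  rewrite subr_ge0 ler_pdivlMr //; lra.
have main : SigmaBar d s K / s d ^+ 2 <= y `^ (2/q).
  rewrite hSB.
  apply: le_trans (_ : K%:R^-1 * (x `^ (2 - q) * Q) <= _).
    apply: ler_wpM2l; first by rewrite invr_ge0 ltW.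
    exact: le_trans hb (ler_wpM2l (powR_ge0 _ _) hc).
  apply: le_trans (_ : K%:R^-1 * (y `^ (2/q - 1) * Q) <= _).
    apply: ler_wpM2l; first by rewrite invr_ge0 ltW.
    exact: ler_wpM2r.
  have -> : K%:R^-1 * (y `^ (2/q - 1) * Q) = (y / 2) * y `^ (2/q - 1).
    by rewrite /y; field; rewrite gt_eqF.
  have h2q : 0 < 2 / q by rewrite divr_gt0.
  rewrite -(mulr_powRB1 y0 h2q).
  apply: ler_wpM2r; first exact: powR_ge0.
  lra.
have hsq : Num.sqrt (y `^ (2/q)) = y `^ q^-1.
  rewrite (_ : 2/q = q^-1 * 2%:R) ?powRrM ?powR_mulrn ?sqrtr_sqr ?ger0_norm ?powR_ge0 //.
  by rewrite mulrC.
apply: le_trans (_ : y `^ q^-1 <= _).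
  by rewrite -hsq ler_sqrt ?powR_ge0.
have kd : (k < d)%N by clear -kK Kd k1; lia.
have dk0 : (0 : R) < (d - k)%:R by rewrite ltr0n subn_gt0.
have dk1 : ((d - k)%:R : R) <= d%:R by rewrite ler_nat leq_subr.
have A0 : (0:R) <= 2 * d%:R / K%:R by rewrite divr_ge0 // mulr_ge0.
have B0 : 0 <= (d-k)%:R^-1 * Q by rewrite mulr_ge0 // invr_ge0 ltW.
rewrite /kappaBar -/r -/Q -(powRM _ A0 B0).
apply: ge0_ler_powR => //; rewrite ?nnegrE ?y0 ?invr_ge0 ?(ltW q0) ?(mulr_ge0 A0 B0) //.
have -> : 2 * d%:R / K%:R * ((d - k)%:R^-1 * Q) = y * (d%:R / (d-k)%:R).
  rewrite /y; move: (d%:R : R) ((d-k)%:R : R) (K%:R : R) => a b c.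
  by rewrite !mulrA; ring.
rewrite ler_peMr // ler_pdivlMr // mul1r //.
Qed.

Lemma expo (R : realType) (p eta u : R) : 1 <= p -> 0 < eta ->
  - (u ^+ 2) * p + (u + 1) ^+ 2 * (p^-1 + eta)^-1 + (u + 1)
  <= p * ((1 + (2 * p)^-1) ^+ 2 - 1) + (1 + (2 * p)^-1) ^+ 2 / eta.
Proof.
move=> p1 e0.
have p0 : p != 0 by rewrite gt_eqF //; lra.
have pe : 1 + p * eta != 0 by rewrite gt_eqF //; nra.
have e0' : eta != 0 by rewrite gt_eqF.
have -> : (p^-1 + eta)^-1 = p / (1 + p * eta).
  have -> : p^-1 + eta = (1 + p * eta) / p by field.
  by rewrite invf_div.
rewrite -subr_ge0.
set b := p ^+ 2 * eta / (1 + p * eta).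
set ts := (2 * p + 1) * (1 + p * eta) / (2 * p ^+ 2 * eta).
have -> : p * ((1 + (2 * p)^-1) ^+ 2 - 1) + (1 + (2 * p)^-1) ^+ 2 / eta -
  (- (u ^+ 2) * p + (u + 1) ^+ 2 * (p / (1 + p * eta)) + (u + 1)) = b * (u + 1 - ts) ^+ 2.
  by rewrite /b /ts; field; rewrite p0 pe e0'.
apply: mulr_ge0; last exact: sqr_ge0.
rewrite /b divr_ge0 // ?mulr_ge0 ?sqr_ge0 //; try lra; nra.
Qed.

Lemma ceil_nat (R : realType) (x : R) : 0 <= x ->
  x <= (`|Num.ceil x|%N)%:R /\ (`|Num.ceil x|%N)%:R < x + 1.
Proof.
move=> x0.
have c0 : 0 <= Num.ceil x by rewrite ceil_ge0 (lt_le_trans _ x0) // ltrN10.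
rewrite natr_absz ger0_norm //.
have := ceil_itv x; rewrite intrB => /andP[h1 h2].
split => //; lra.
Qed.

Lemma kpar_ge (R : realType) d k (alpha : R) t :
  d%:R * expR (- (alpha * t%:R ^+ 2)) <= (kpar d k alpha t)%:R /\
  (2 * k)%N%:R <= (kpar d k alpha t)%:R :> R.
Proof.
have x0 : 0 <= d%:R * expR (- (alpha * t%:R ^+ 2)) :> R by rewrite mulr_ge0 // expR_ge0.
have [h1 _] := @ceil_nat _ _ x0.
rewrite /kpar; split.
  apply: le_trans h1 _; rewrite ler_nat; exact: leq_maxl.
rewrite ler_nat; exact: leq_maxr.
Qed.

Lemma kpar_le (R : realType) d k (alpha : R) t :
  (1 <= k)%N -> (2 * k)%N%:R < d%:R * expR (- (alpha * t%:R ^+ 2)) ->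
  (kpar d k alpha t)%:R <= 2 * (d%:R * expR (- (alpha * t%:R ^+ 2))) :> R.
Proof.
move=> k1 hx.
set x := d%:R * expR (- (alpha * t%:R ^+ 2)) in hx *.
have x0 : 0 <= x by rewrite mulr_ge0 // expR_ge0.
have [_ h2] := @ceil_nat _ _ x0.
have k2 : (2 : R) <= (2 * k)%N%:R by rewrite natrM ler_peMr // ler1n.
rewrite /kpar /maxn; case: ifP => _; lra.
Qed.

Lemma tpar_bound (R : realType) d k (alpha : R) t :
  1 <= alpha -> (1 <= k)%N -> (2 * k <= d)%N -> (1 <= t)%N -> (t <= Tpar d k alpha)%N ->
  (2 * k)%N%:R < d%:R * expR (- (alpha * (t.-1)%:R ^+ 2)) :> R.
Proof.
move=> a1 k1 kd t1 tT.
have k0 : (0 : R) < (2 * k)%N%:R by rewrite ltr0n; lia.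
have dk : (2 * k)%N%:R <= d%:R :> R by rewrite ler_nat.
have d0 : (0 : R) < d%:R by apply: lt_le_trans dk.
set L := ln (d%:R / (2 * k)%N%:R : R).
have L0 : 0 <= L by apply: ln_ge0; rewrite ler_pdivlMr // mul1r.
have a0 : 0 < alpha by lra.
set S := Num.sqrt (L / alpha).
have S0 : 0 <= S by exact: sqrtr_ge0.
have [_ hS] := @ceil_nat _ S S0.
have tT' : (t%:R : R) <= (Tpar d k alpha)%:R by rewrite ler_nat.
have hu : ((t.-1)%:R : R) = t%:R - 1 by rewrite -subn1 natrB.
have u0 : (0 : R) <= (t.-1)%:R by [].
have uS : ((t.-1)%:R : R) < S.
  rewrite hu; move: tT' hS; rewrite /Tpar -/L -/S; lra.
have SS : S ^+ 2 = L / alpha by rewrite sqr_sqrtr // divr_ge0 // ltW.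
have u2 : ((t.-1)%:R : R) ^+ 2 * alpha < L.
  rewrite -ltr_pdivlMr // -SS; nra.
have e1 : expR (alpha * (t.-1)%:R ^+ 2) < d%:R / (2 * k)%N%:R.
  rewrite -[X in _ < X]lnK; last by rewrite posrE divr_gt0.
  by rewrite ltr_expR -/L mulrC.
rewrite expRN -[d%:R * _]/(d%:R / _) ltr_pdivlMr ?expR_gt0 //.
by rewrite mulrC -ltr_pdivlMr.
Qed.

Theorem lemma4p12 (R : realType) :
  exists C : R, 0 < C /\
  forall (n d : nat) (A : 'M[R]_(n, d)) (s : nat -> R) (k : nat)
         (alpha p eta : R) (t : nat),
    (d <= n)%N ->
    is_singular_values A s ->
    \rank A = d ->
    0 < s d ->
    (1 <= k)%N -> (k <= d)%N -> (2 * k <= d)%N ->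
    1 <= alpha ->
    1 <= p -> p <= 100 ->
    0 < eta -> eta < 1 ->
    (1 <= t)%N -> (t <= Tpar d k alpha)%N ->
    let cp := 1 + (2 * p)^-1 in
    (kpar d k alpha t.-1)%:R `^ p
      * Num.sqrt (SigmaBar d s (kpar d k alpha t) / s d ^+ 2)
      * expR (alpha * t%:R)
    <= C * (d%:R `^ p * kappaBar d s k (p^-1 + eta)
            * expR (alpha * (p * (cp ^+ 2 - 1) + cp ^+ 2 / eta))).
Proof.
exists (2 `^ 100 * 2 `^ 100); split; first by rewrite mulr_gt0 // powR_gt0.
move=> n d A s k alpha p eta t dn hsv rk sd0 k1 kd k2d a1 p1 p100 e0 e1 t1 tT; cbv zeta.
case: hsv => mono _.
set q := p^-1 + eta.
have p0 : 0 < p by lra.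
have a0 : 0 < alpha by lra.
have pi1 : p^-1 <= 1 by rewrite -[p^-1]mul1r ler_pdivrMr // mul1r.
have q0 : 0 < q by rewrite /q addr_gt0 // invr_gt0.
have q2 : q < 2 by rewrite /q; lra.
have hK2n : (2 * k <= kpar d k alpha t)%N by apply: leq_maxr.
have hkey := @key R d k (kpar d k alpha t) s q k1 hK2n q0 q2 mono sd0.
have [hKx hK2] := @kpar_ge R d k alpha t.
have hx := @tpar_bound R d k alpha t a1 k1 k2d t1 tT.
have hK' := @kpar_le R d k alpha t.-1 k1 hx.
set K := kpar d k alpha t in hkey hKx hK2 *.
set K' := kpar d k alpha t.-1 in hK' *.
set E1 := expR (- (alpha * (t.-1)%:R ^+ 2)) in hx hK' *.
set E2 := expR (alpha * t%:R ^+ 2).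
have k0 : (0 : R) < (2 * k)%N%:R by rewrite ltr0n muln_gt0.
have K0 : (0 : R) < K%:R by apply: lt_le_trans hK2.
have d0 : (0 : R) < d%:R by rewrite ltr0n; apply: leq_trans k2d; rewrite muln_gt0.
have E10 : 0 < E1 by apply: expR_gt0.
have E20 : 0 < E2 by apply: expR_gt0.
have kap0 : 0 <= kappaBar d s k q by apply: powR_ge0.
apply: le_trans (_ : (2 * (d%:R * E1)) `^ p * ((2 * E2) `^ q^-1 * kappaBar d s k q)
   * expR (alpha * t%:R) <= _).
  apply: ler_wpM2r; first exact: expR_ge0.
  apply: ler_pM; [exact: powR_ge0 | exact: sqrtr_ge0 | |].
    apply: ge0_ler_powR; rewrite ?nnegrE ?(ltW p0) //.
    by rewrite mulr_ge0 // mulr_ge0 // ltW.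
  apply: le_trans hkey _.
  apply: ler_wpM2r => //.
  apply: ge0_ler_powR; rewrite ?nnegrE ?invr_ge0 ?(ltW q0) //.
  - by rewrite mulr_ge0 // ltW.
  rewrite ler_pdivrMr // -mulrA ler_wpM2l //.
  have : d%:R / E2 <= K%:R by rewrite /E2 -expRN.
  by rewrite ler_pdivrMr // mulrC.
rewrite powRM ?mulr_ge0 ?(ltW d0) ?(ltW E10) //.
rewrite powRM ?(ltW d0) ?(ltW E10) //.
rewrite powRM ?(ltW E20) //.
rewrite /E1 /E2 -!expRM.
have ht : (t%:R : R) = (t.-1)%:R + 1 by rewrite -[in LHS](prednK t1) -addn1 natrD.
rewrite ht.
set u := ((t.-1)%:R : R).
set kap := kappaBar d s k q.
have -> : 2 `^ p * (d%:R `^ p * expR (- (alpha * u ^+ 2) * p)) *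
   (2 `^ q^-1 * expR (alpha * (u + 1) ^+ 2 * q^-1) * kap) * expR (alpha * (u + 1))
   = (2 `^ p * 2 `^ q^-1) * (d%:R `^ p * kap *
     expR (- (alpha * u ^+ 2) * p + alpha * (u + 1) ^+ 2 * q^-1 + alpha * (u + 1))).
  by rewrite !expRD; ring.
apply: ler_pM.
- by rewrite mulr_ge0 // powR_ge0.
- by rewrite mulr_ge0 ?expR_ge0 // mulr_ge0 // powR_ge0.
- have qp : q^-1 <= p.
    rewrite -[p]invrK lef_pV2 ?posrE ?invr_gt0 //.
    by rewrite /q lerDl ltW.
  apply: ler_pM; rewrite ?powR_ge0 //; apply: ler_powR; rewrite ?ler1n //; lra.
apply: ler_wpM2l; first by rewrite mulr_ge0 // powR_ge0.
rewrite ler_expR.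
have h := @expo R p eta u p1 e0.
have h' := ler_wpM2l (ltW a0) h.
apply: le_trans h'.
by rewrite /q le_eqVlt; apply/orP; left; apply/eqP; ring.
Qed.
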